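(* There is $C_0=C_0(N)>0$ such that for every $T>0$, every $f\in\mathcal{VT}_1^+(T)$ and every $\mathbf{x}_0\in\mathbb{R}^N$, $$f(\mathbf{x}_0)\le C_0T^{-\frac N2}\int_{B_{\sqrt T}(\mathbf{x}_0)}f\,d\mathcal{L}^N\le C_0T^{-\frac N2}.$$
   Context: For positive $U\in C^2(\mathbb{R}^N)$, $\tau(U)=\sup\{\tau\ge0:2\tau\nabla^2\log U+g_{\mathbb{R}}\ge0\}$ (inequality of symmetric matrices); $\mathcal{VT}_1^+(T)=\{u\in C^2\cap L^1(\mathbb{R}^N):u>0,\tau(u)\ge T,\int_{\mathbb{R}^N}u\,d\mathcal{L}^N=1\}$. *)

(* Defs.v *)
From HB Require Import structures.
From mathcomp Require Import all_boot all_order all_algebra.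
From mathcomp Require Import all_classical all_reals all_analysis.
Set Implicit Arguments. Unset Strict Implicit. Unset Printing Implicit Defensive.
Import Order.TTheory GRing.Theory Num.Theory.
Import numFieldNormedType.Exports.
Local Open Scope classical_set_scope.
Local Open Scope ring_scope.

Section VT.
Variable R : realType.

Definition ebasis (N : nat) (i : 'I_N) : 'rV[R]_N := delta_mx 0 i.

Definition partial (N : nat) (i : 'I_N) (h : 'rV[R]_N -> R) : 'rV[R]_N -> R :=
  fun x => derive h x (ebasis i).

Definition C2 (N : nat) (U : 'rV[R]_N -> R) : Prop :=
  [/\ continuous U,
      (forall i x, derivable U x (ebasis i)),
      (forall i, continuous (partial i U)),
      (forall i j x, derivable (partial i U) x (ebasis j)) &
      (forall i j, continuous (partial j (partial i U)))].

Definition enorm (N : nat) (x : 'rV[R]_N) : R := Num.sqrt (\sum_i x 0 i ^+ 2).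
Definition eball (N : nat) (x0 : 'rV[R]_N) (r : R) : set 'rV[R]_N :=
  [set x | enorm (x - x0) < r].

(* Lebesgue integral on R^N of a nonnegative (extended-real) function,
   as the iterated integral w.r.t. the 1-dimensional Lebesgue measure
   (equal to the N-dimensional Lebesgue integral by Tonelli). *)
Fixpoint iint (n : nat) : ('rV[R]_n -> \bar R) -> \bar R :=
  match n with
  | 0 => fun F => F 0
  | n'.+1 => fun F =>
      (\int[@lebesgue_measure R]_t iint (fun y : 'rV[R]_n' => F (row_mx (\row_(k < 1) t) y)))%E
  end.

(* 2 tau Hess(log U) + g >= 0 as symmetric matrices, g = Euclidean metric *)
Definition hess_cond (N : nat) (U : 'rV[R]_N -> R) (tau : R) : Prop :=
  forall (x v : 'rV[R]_N),
    0 <= \sum_i \sum_j v 0 i * v 0 j *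
            (2 * tau * partial j (partial i (fun y => ln (U y))) x
             + (i == j)%:R).

Definition tauU (N : nat) (U : 'rV[R]_N -> R) : \bar R :=
  ereal_sup [set t%:E | t in [set t : R | 0 <= t /\ hess_cond U t]].

Definition VT1plus (N : nat) (T : R) : set ('rV[R]_N -> R) :=
  [set u | [/\ C2 u,
              (iint (fun x => (`|u x|)%:E) < +oo)%E,
              (forall x, 0 < u x),
              (T%:E <= tauU u)%E &
              iint (fun x => (u x)%:E) = 1%E]].

End VT.

(* Main.v *)
Require Import Defs.
From HB Require Import structures.
From mathcomp Require Import all_boot all_order all_algebra.
From mathcomp Require Import all_classical all_reals all_analysis.
From mathcomp Require Import ring lra.
Import Order.TTheory GRing.Theory Num.Theory.
Import numFieldNormedType.Exports.
Local Open Scope classical_set_scope.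
Local Open Scope ring_scope.
Section Aux.
Variable R : realType.

Lemma int_mono (f g : R -> \bar R) :
  (forall x, 0 <= f x)%E -> (forall x, f x <= g x)%E ->
  (\int[@lebesgue_measure R]_t f t <= \int[@lebesgue_measure R]_t g t)%E.
Proof.
move=> f0 fg.
have g0 : forall x, (0 <= g x)%E by move=> x; exact: le_trans (f0 x) (fg x).
rewrite !ge0_integralTE //.
apply: le_ereal_sup => _ [h /= hf <-]; exists h => //= x.
exact: le_trans (hf x) (fg x).
Qed.

Lemma iint_ge0 n (F : 'rV[R]_n -> \bar R) : (forall x, 0 <= F x)%E -> (0 <= iint F)%E.
Proof.
elim: n F => [|n IH] F F0 /=; first exact: F0.
apply: integral_ge0 => t _; exact: IH.
Qed.

Lemma iint_mono n (F G : 'rV[R]_n -> \bar R) : (forall x, 0 <= F x)%E ->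
  (forall x, F x <= G x)%E -> (iint F <= iint G)%E.
Proof.
elim: n F G => [|n IH] F G F0 FG /=; first exact: FG.
apply: int_mono => t; first exact: iint_ge0.
exact: IH.
Qed.

Lemma int_indic_interval (k lo hi : R) : 0 <= k -> lo <= hi ->
  (\int[@lebesgue_measure R]_t (k * \1_(`[lo, hi]%classic) t)%:E = (k * (hi - lo))%:E)%E.
Proof.
move=> k0 lh.
have H := @integralZl_indic _ _ _ (@lebesgue_measure R) setT measurableT (fun _ => `[lo, hi]%classic) k.
rewrite /= in H; rewrite H //; last first.
  by rewrite ltNge k0.
rewrite integral_indic // setIT.
have L := lebesgue_measure_itv `[lo, hi]; rewrite /= in L.
change (k%:E * lebesgue_measure `[lo, hi]%classic = (k * (hi - lo))%:E)%E.
rewrite L.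
case: ifPn => [_|]; first by rewrite -EFinD -EFinM.
rewrite lte_fin -leNgt => hl; have -> : hi = lo by apply/eqP; rewrite eq_le hl lh.
by rewrite subrr mulr0 mule0.
Qed.


Definition boxc n (c : 'rV[R]_n) (a : R) : set 'rV[R]_n :=
  [set x | forall i, `|x 0 i - c 0 i| <= a].

Definition Qp n (G : 'rV[R]_n -> R) (a : R) := forall x i,
  (forall s, 0 <= s <= a -> G x / 2 <= G (x + s *: @ebasis R _ i)) \/
  (forall s, 0 <= s <= a -> G x / 2 <= G (x - s *: @ebasis R _ i)).

Arguments Qp {n}.

Lemma ring1 (x y z : R) : x * (y / 2) * z = x * (z / 2) * y.
Proof. by ring. Qed.

Arguments boxc {n}.

Lemma M1 n (t s : R) (y : 'rV[R]_n) i :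
  row_mx (\row_(k < 1) t) y + s *: @ebasis R _ (rshift 1 i) =
  row_mx (\row_(k < 1) t) (y + s *: @ebasis R _ i).
Proof. by rewrite /ebasis delta_mx_rshift scale_row_mx add_row_mx scaler0 addr0. Qed.

Lemma M2 n (t s : R) (y : 'rV[R]_n) :
  row_mx (\row_(k < 1) t) y + s *: @ebasis R _ (lshift n (0 : 'I_1)) =
  row_mx (\row_(k < 1) (t + s)) y.
Proof.
rewrite /ebasis delta_mx_lshift scale_row_mx add_row_mx scaler0 addr0.
congr row_mx; apply/rowP => k; rewrite !mxE (ord1 k) /=. by rewrite mulr1.
Qed.

Lemma Qp_slice n (G : 'rV[R]_n.+1 -> R) a t :
  Qp G a -> Qp (fun y => G (row_mx (\row_(k < 1) t) y)) a.
Proof.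
move=> QG y i; case: (QG (row_mx (\row_(k < 1) t) y) (rshift 1 i)) => H; [left|right] => s hs.
  by rewrite -M1; exact: H.
by rewrite -scaleNr -M1 scaleNr; exact: H.
Qed.

Lemma box_split n (t c0 : R) (y cr : 'rV[R]_n) a :
  (row_mx (\row_(k < 1) t) y \in boxc (row_mx (\row_(k < 1) c0) cr) a) =
  (`|t - c0| <= a) && (y \in boxc cr a).
Proof.
apply/idP/idP.
  move=> /set_mem H; apply/andP; split.
    by have := H (lshift n (0 : 'I_1)); rewrite !row_mxEl !mxE.
  by apply/mem_set => j; have := H (rshift 1 j); rewrite !row_mxEr.
move=> /andP[H1 /set_mem H2]; apply/mem_set => i.
move: (splitK i); case: (fintype.split i) => j /= <-.
  by rewrite !row_mxEl !mxE.
by rewrite !row_mxEr.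
Qed.

Lemma box_lower n (G : 'rV[R]_n -> R) (a : R) (c : 'rV[R]_n) :
  0 <= a -> (forall x, 0 <= G x) -> Qp G a ->
  (((a / 2) ^+ n * G c)%:E <= iint (fun x => (\1_(boxc c a) x * G x)%:E))%E.
Proof.
elim: n G c => [|n IH] G c a0 G0 QG.
  rewrite /= expr0 mul1r indicE.
  have -> : (0 : 'rV[R]_0) \in boxc c a by apply/mem_set => -[].
  by rewrite mul1r lee_fin [c]thinmx0.
have [c0 [cr ->]] : exists c0 cr, c = row_mx (\row_(k < 1) c0) cr.
  exists ((c : 'rV[R]_(1 + n)) 0 (lshift n (0 : 'I_1))), (rsubmx (c : 'rV[R]_(1 + n))).
  transitivity (row_mx (lsubmx (c : 'rV[R]_(1 + n))) (rsubmx (c : 'rV[R]_(1 + n)))); first by rewrite hsubmxK.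
  by f_equal; apply/rowP => k; rewrite (ord1 k) !mxE.
set Gc := G (row_mx (\row_(k < 1) c0) cr).
have [lo [hi [lh [hl Hi]]]] : exists lo hi, [/\ lo <= hi, hi - lo = a &
    forall t, lo <= t <= hi -> `|t - c0| <= a /\ Gc / 2 <= G (row_mx (\row_(k < 1) t) cr)].
  case: (QG (row_mx (\row_(k < 1) c0) cr) (lshift n (0 : 'I_1))) => H.
    exists c0, (c0 + a); split; first by rewrite lerDl.
      by rewrite addrC addKr.
    move=> t /andP[t1 t2]; split.
      by rewrite ger0_norm ?subr_ge0 // lerBlDl.
    have := H (t - c0); rewrite M2 subrKC; apply.
    by rewrite subr_ge0 t1 /= lerBlDl.
  exists (c0 - a), c0; split; first by rewrite gerBl.
    by rewrite opprB addrC subrK.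
  move=> t /andP[t1 t2]; split.
    by rewrite ler0_norm ?subr_le0 // opprB lerBlDl addrC -lerBlDl.
  have := H (c0 - t); rewrite -scaleNr M2 opprB addrCA subrr addr0; apply.
  by rewrite subr_ge0 t2 /= lerBlDl addrC -lerBlDl.
have Gc0 : 0 <= Gc by exact: G0.
apply: (@le_trans _ _ (\int[@lebesgue_measure R]_t ((a / 2) ^+ n * (Gc / 2) * \1_(`[lo, hi]%classic) t)%:E)%E).
  rewrite int_indic_interval ?hl //; last by rewrite mulr_ge0 ?exprn_ge0 ?divr_ge0.
  by rewrite lee_fin exprSr ring1.
apply: int_mono => t.
  by rewrite lee_fin mulr_ge0 ?indic_ge0 // mulr_ge0 ?exprn_ge0 ?divr_ge0.
rewrite indicE; case: (boolP (t \in _)) => ht; last first.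
  by rewrite mulr0; apply: iint_ge0 => y; rewrite lee_fin mulr_ge0 ?indic_ge0.
have [Ht1 Ht2] := Hi t (set_mem ht).
rewrite mulr1.
apply: (@le_trans _ _ (iint (fun y => (\1_(boxc cr a) y * G (row_mx (\row_(k < 1) t) y))%:E))); last first.
  apply: iint_mono => y; first by rewrite lee_fin mulr_ge0 ?indic_ge0.
  by rewrite !indicE box_split Ht1.
apply: le_trans; last first.
  apply: (IH (fun y => G (row_mx (\row_(k < 1) t) y))) => //.
  exact: Qp_slice.
by rewrite lee_fin ler_wpM2l ?exprn_ge0 ?divr_ge0.
Qed.

End Aux.
Arguments Qp {R n}.
Arguments boxc {R n}.

Section Ana.
Variable R : realType.
Variable n : nat.
Implicit Types (H : 'rV[R]_n -> R).

Lemma line_fun H x v s :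
  (fun h : R => h^-1 *: (((fun r : R => H (r *: v + x)) \o shift s) (h *: 1) - H (s *: v + x))) =
  (fun h : R => h^-1 *: ((H \o shift (s *: v + x)) (h *: v) - H (s *: v + x))).
Proof.
apply/funext => h /=; congr (_ *: (H _ - _)).
rewrite (_ : h *: 1 = h); last by rewrite /GRing.scale /= mulr1.
by rewrite scalerDl addrA.
Qed.

Lemma line_derive H x v s :
  derive (fun r : R => H (r *: v + x)) s 1 = derive H (s *: v + x) v.
Proof. by rewrite /derive line_fun. Qed.

Lemma line_derivable H x v s :
  derivable (fun r : R => H (r *: v + x)) s 1 <-> derivable H (s *: v + x) v.
Proof. by rewrite /derivable line_fun. Qed.


Lemma dln (g : R -> R) s : 0 < g s -> derivable g s 1 ->
  derivable (fun r => ln (g r)) s 1 /\ derive (fun r => ln (g r)) s 1 = derive g s 1 / g s.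
Proof.
move=> gs dg.
have dl : derivable (@ln R) (g s) 1 by apply: ex_derive; exact: is_derive1_ln.
have dc : derivable ((@ln R) \o g) s 1.
  apply/derivable1_diffP; apply: differentiable_comp; exact/derivable1_diffP.
split; first exact: dc.
have := derive1_comp dg dl; rewrite !derive1E => /= ->.
have [_ ->] := is_derive1_ln gs.
by rewrite mulrC.
Qed.

Lemma dL (f : 'rV[R]_n -> R) v y : (forall z, 0 < f z) -> derivable f y v ->
  derivable (fun z => ln (f z)) y v /\
  derive (fun z => ln (f z)) y v = derive f y v / f y.
Proof.
move=> fpos df.
have := (line_derivable f y v 0).2; rewrite scale0r add0r => /(_ df) dg.
have := @dln (fun r => f (r *: v + y)) 0 (fpos _) dg; rewrite /= scale0r add0r => -[d1 d2].
split.
  have := (line_derivable (fun z => ln (f z)) y v 0).1; rewrite scale0r add0r; apply.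
  exact: d1.
have := line_derive (fun z => ln (f z)) y v 0; rewrite scale0r add0r => <-.
rewrite d2; congr (_ / _).
by have := line_derive f y v 0; rewrite scale0r add0r.
Qed.


Lemma der_cont (g : R -> R) : (forall s, derivable g s 1) ->
  forall A, {within A, continuous g}.
Proof.
move=> dg A; apply: continuous_subspaceT => x.
exact/differentiable_continuous/derivable1_diffP.
Qed.

Lemma mvt_lower (g : R -> R) (m : R) :
  (forall s, derivable g s 1) ->
  (forall s, derivable (fun r => derive g r 1) s 1) ->
  (forall s, -m <= derive (fun r => derive g r 1) s 1) ->
  0 <= m ->
  forall s, 0 <= s ->
    (0 <= derive g 0 1 -> g 0 - m * s ^+ 2 <= g s) /\
    (derive g 0 1 <= 0 -> g 0 - m * s ^+ 2 <= g (- s)).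
Proof.
move=> dg dgd hm m0 s s0.
set gd := fun r => derive g r 1.
have A : forall u w, u <= w -> - m * (w - u) <= gd w - gd u.
  move=> u w uw.
  have [c _ ->] := @MVT_segment R gd (fun r => derive gd r 1) u w uw
    (fun r _ => derivableP (dgd r)) (@der_cont gd dgd _).
  by rewrite ler_wpM2r ?subr_ge0.
have B : forall u w, u <= w -> exists2 c, u <= c <= w & g w - g u = gd c * (w - u).
  move=> u w uw.
  have [c /[!in_itv] /= cI E] := @MVT_segment R g gd u w uw
    (fun r _ => derivableP (dg r)) (@der_cont g dg _).
  by exists c.
split => h0.
  have [c /andP[c0 cs] E] := B 0 s s0.
  have := A 0 c c0; rewrite /gd => Ac.
  rewrite subr0 in E; rewrite subr0 in Ac.
  have : - m * s <= gd c by rewrite /gd; nra.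
  nra.
have ss : - s <= 0 by rewrite oppr_le0.
have [c /andP[c0 cs] E] := B (- s) 0 ss.
have := A c 0 cs; rewrite /gd => Ac.
rewrite sub0r opprK in E; rewrite sub0r in Ac.
have : gd c <= m * s by rewrite /gd; nra.
nra.
Qed.


Lemma ln_half (p q : R) : 0 < p -> 0 < q -> ln p - 2^-1 <= ln q -> p / 2 <= q.
Proof.
move=> p0 q0 h.
have h2 := h; rewrite -ler_expR in h2.
rewrite expRD lnK ?posrE // lnK ?posrE // in h2.
apply: le_trans h2.
rewrite ler_pM2l //.
have := expR_ge1Dx (- 2^-1 : R).
apply: le_trans; lra.
Qed.

Lemma f_Qp (f : 'rV[R]_n -> R) (t a : R) :
  C2 f -> (forall z, 0 < f z) -> 0 < t -> hess_cond f t -> a ^+ 2 <= t -> Qp f a.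
Proof.
move=> [c0 c1 c2 c3 c4] fpos t0 hc a2 x i.
set v := @ebasis R _ i.
set L := fun z => ln (f z).
have dLy y : derivable L y v /\ derive L y v = partial i f y / f y.
  exact: dL fpos (c1 i y).
have L1E : partial i L = fun y => partial i f y / f y.
  by apply/funext => y; rewrite /partial -(dLy y).2.
have dL1 y : derivable (partial i L) y v.
  rewrite L1E; apply: derivableM; first exact: c3.
  apply: derivableV; [exact: lt0r_neq0 | exact: c1].
have hess y : - (2 * t)^-1 <= partial i (partial i L) y.
  have := hc y v.
  rewrite (bigD1 i) //= [X in _ + X]big1 ?addr0; last first.
    by move=> k ki; apply: big1 => l _; rewrite /v /ebasis mxE (negbTE ki) andbF /= !mul0r.
  rewrite (bigD1 i) //= [X in _ + X]big1 ?addr0; last first.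
    by move=> l li; rewrite /v /ebasis !mxE (negbTE li) andbF /= mulr0 mul0r.
  rewrite /v /ebasis mxE !eqxx /= !mul1r => H.
  have t2 : 0 < 2 * t by rewrite mulr_gt0.
  have ti : 0 < (2 * t)^-1 by rewrite invr_gt0.
  have := mulr_ge0 (ltW ti) H.
  rewrite mulrDr mulrA mulVf ?gt_eqF // mul1r mulr1 => H2.
  by rewrite /L; lra.
set g := fun r : R => L (r *: v + x).
have gdE : (fun r => derive g r 1) = fun r => partial i L (r *: v + x).
  by apply/funext => r; rewrite /g line_derive.
have dg s : derivable g s 1 by apply/line_derivable; exact: (dLy _).1.
have dgd s : derivable (fun r => derive g r 1) s 1.
  by rewrite gdE; apply/(line_derivable (partial i L)); exact: dL1.
have hm s : - (2 * t)^-1 <= derive (fun r => derive g r 1) s 1.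
  by rewrite gdE line_derive; exact: hess.
have m0 : 0 <= (2 * t)^-1 by rewrite invr_ge0 mulr_ge0 // ltW.
have key s : 0 <= s <= a -> (2 * t)^-1 * s ^+ 2 <= 2^-1.
  move=> /andP[s0 sa].
  have s2 : s ^+ 2 <= t by apply: le_trans a2; rewrite ler_pXn2r // ?nnegrE // (le_trans s0).
  rewrite invfM mulrAC ler_pdivrMr //.
  by rewrite ler_pM2l // invr_gt0.
have g0 : g 0 = L x by rewrite /g scale0r add0r.
case: (leP 0 (derive g 0 1)) => h; [left|right] => s hs; move: (hs) => /andP[s0 sa].
  have := (@mvt_lower g _ dg dgd hm m0 _ s0).1 h.
  rewrite g0 /g /L => h2.
  apply: ln_half => //; rewrite [x + _]addrC; have := key s hs; lra.
have := (@mvt_lower g _ dg dgd hm m0 _ s0).2 (ltW h).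
rewrite g0 /g /L scaleNr => h2.
apply: ln_half => //; rewrite [x - _]addrC; have := key s hs; lra.
Qed.

End Ana.

Lemma pow_half (R : realType) (T : R) (N : nat) : 0 < T ->
  T `^ (- (N%:R / 2)) = ((Num.sqrt T) ^+ N)^-1.
Proof.
move=> T0.
by rewrite powRN mulrC powRrM powR12_sqrt ?ltW // powR_mulrn // sqrtr_ge0.
Qed.

Theorem mainTheorem14 (R : realType) (N : nat) :
  exists C0 : R, 0 < C0 /\
    forall (T : R), 0 < T ->
    forall f : 'rV[R]_N -> R, VT1plus T f ->
    forall x0 : 'rV[R]_N,
      ((f x0)%:E <= (C0 * T `^ (- (N%:R / 2)))%:E *
                     iint (fun x => (\1_(eball x0 (Num.sqrt T)) x * f x)%:E))%E /\
      ((C0 * T `^ (- (N%:R / 2)))%:E *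
         iint (fun x => (\1_(eball x0 (Num.sqrt T)) x * f x)%:E)
       <= (C0 * T `^ (- (N%:R / 2)))%:E)%E.
Proof.
set k : R := 2 * (N%:R + 1).
have N0 : 0 <= N%:R :> R by [].
have k0 : 0 < k by rewrite /k; lra.
exists ((2 * Num.sqrt k) ^+ N); split.
  by rewrite exprn_gt0 // mulr_gt0 // sqrtr_gt0.
move=> T T0 f [fC2 fint fpos ftau f1] x0.
have [t [t0 ht] tT] : exists2 t, (0 <= t /\ hess_cond f t) & T / 2 < t.
  have : ((T / 2)%:E < tauU f)%E.
    by apply: lt_le_trans ftau; rewrite lte_fin; lra.
  by move=> /ereal_sup_gt [_ [t ht <-]]; rewrite lte_fin => tT; exists t.
have tpos : 0 < t by lra.
set a := Num.sqrt T / Num.sqrt k.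
have a0 : 0 <= a by rewrite /a divr_ge0 // sqrtr_ge0.
have a2 : a ^+ 2 = T / k by rewrite /a expr_div_n !sqr_sqrtr // ltW.
have a2t : a ^+ 2 <= t.
  rewrite a2; apply: le_trans (ltW tT).
  rewrite ler_pdivrMr // /k; nra.
have QP := @f_Qp R N f t a fC2 fpos tpos ht a2t.
have BL := @box_lower R N f a x0 a0 (fun x => ltW (fpos x)) QP.
have sub x : ((\1_(boxc x0 a) x * f x)%:E <= (\1_(eball x0 (Num.sqrt T)) x * f x)%:E)%E.
  rewrite lee_fin !indicE; case: (boolP (x \in boxc x0 a)) => hx; last first.
    by rewrite mul0r mulr_ge0 // ltW.
  suff -> : x \in eball x0 (Num.sqrt T) by [].
  apply/mem_set; rewrite /eball /= /enorm ltr_sqrt //.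
  apply: (@le_lt_trans _ _ (\sum_(i < N) a ^+ 2)).
    apply: ler_sum => i _; rewrite !mxE -real_normK ?num_real //.
    rewrite ler_pXn2r ?nnegrE ?normr_ge0 //.
    by move/set_mem: hx; apply.
  rewrite sumr_const card_ord a2 -mulr_natl mulrA ltr_pdivrMr // /k; nra.
set I := iint (fun x => (\1_(eball x0 (Num.sqrt T)) x * f x)%:E).
have LB : (((a / 2) ^+ N * f x0)%:E <= I)%E.
  apply: le_trans BL _; apply: iint_mono => // x.
  by rewrite lee_fin mulr_ge0 ?indic_ge0 // ltW.
have UB : (I <= 1)%E.
  rewrite -f1; apply: iint_mono => x.
    by rewrite lee_fin mulr_ge0 ?indic_ge0 // ltW.
  rewrite lee_fin indicE; case: (_ \in _); rewrite ?mul1r ?mul0r //.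
  exact: ltW.
set C := (2 * Num.sqrt k) ^+ N * T `^ (- (N%:R / 2)).
have C0 : 0 <= C by rewrite /C mulr_ge0 ?powR_ge0 // exprn_ge0 // mulr_ge0 // sqrtr_ge0.
have CE : C * (a / 2) ^+ N = 1.
  have sT : 0 < Num.sqrt T by rewrite sqrtr_gt0.
  have sk : 0 < Num.sqrt k by rewrite sqrtr_gt0.
  rewrite /C pow_half // /a -!exprVn -!exprMn.
  rewrite -(expr1n _ N); congr (_ ^+ _).
  by field; rewrite !gt_eqF.
split.
  have -> : f x0 = C * ((a / 2) ^+ N * f x0) by rewrite mulrA CE mul1r.
  by rewrite EFinM; apply: lee_wpmul2l.
by rewrite -[X in (_ <= X)%E]mule1; apply: lee_wpmul2l.
Qed.
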